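(* Let $p$ be a prime, let $s\geq 2$, and let $t_1\geq 1,t_2,\dots,t_s$ be nonnegative integers with $t_s\geq 1$. Then the $\mathbb{Z}_{p^s}$-linear GH code $H^{t_1,\dots,t_s}$ is equivalent to the $\mathbb{Z}_{p^{s+\ell}}$-linear GH code $H^{1,\mathbf{0}^{\ell-1},t_1-1,t_2,\dots,t_{s-1},t_s-\ell}$ for every $\ell\in\{1,\dots,t_s\}$, where $\mathbf{0}^{\ell-1}$ denotes a string of $\ell-1$ zeros (so the superscript is an $(s+\ell)$-tuple).
   Context: Let $p$ be prime. For $s\geq 1$ and $u\in\mathbb{Z}_{p^s}$ with $p$-ary expansion $u=\sum_{i=0}^{s-1}u_ip^i$, $u_i\in\{0,\dots,p-1\}$, the Gray map $\phi_s:\mathbb{Z}_{p^s}\to\mathbb{Z}_p^{p^{s-1}}$ is $\phi_s(u)=(u_{s-1},\dots,u_{s-1})+(u_0,\dots,u_{s-2})Y_{s-1}$, where $Y_1=(0\ 1\ \cdots\ p-1)$ and, for $k\geq 2$, $Y_k$ is the $k\times p^k$ matrix whose first $k-1$ rows are $(Y_{k-1}\ Y_{k-1}\ \cdots\ Y_{k-1})$ ($p$ copies) and whose last row is $(0,\dots,0,1,\dots,1,\dots,p-1,\dots,p-1)$ (constant blocks of length $p^{k-1}$); $\phi_1$ is the identity. $\Phi_s:\mathbb{Z}_{p^s}^n\to\mathbb{Z}_p^{np^{s-1}}$ applies $\phi_s$ to each coordinate and concatenates. For $1\le i\le s$ let $T_i=\{jp^{i-1}: 0\le j\le p^{s-i+1}-1\}\subseteq\mathbb{Z}_{p^s}$.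 For nonnegative integers $t_1\geq1,t_2,\dots,t_s$, $A^{t_1,\dots,t_s}$ is the matrix over $\mathbb{Z}_{p^s}$ whose columns are all vectors $\mathbf{z}^T$ with $\mathbf{z}\in\{1\}\times T_1^{t_1-1}\times T_2^{t_2}\times\cdots\times T_s^{t_s}$; $\mathcal{H}^{t_1,\dots,t_s}$ is the subgroup of $\mathbb{Z}_{p^s}^n$ generated by its rows, and $H^{t_1,\dots,t_s}=\Phi_s(\mathcal{H}^{t_1,\dots,t_s})$, called a $\mathbb{Z}_{p^s}$-linear GH (generalized Hadamard) code; it is a code over $\mathbb{Z}_p$ of length $p^t$ with $t=\sum_{i=1}^s(s-i+1)t_i-1$. Two codes $C_1,C_2\subseteq\mathbb{Z}_p^N$ are equivalent if there exist $\mathbf{a}\in\mathbb{Z}_p^N$ and a coordinate permutation $\pi$ with $C_2=\{\mathbf{a}+\pi(\mathbf{c}):\mathbf{c}\in C_1\}$. *)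

(* Defs.v *)
From HB Require Import structures.
From mathcomp Require Import all_boot all_order all_algebra.
Set Implicit Arguments. Unset Strict Implicit. Unset Printing Implicit Defensive.
Import GRing.Theory.
Local Open Scope ring_scope.

Definition digit (p i u : nat) : nat := ((u %/ p ^ i) %% p)%N.

(* (Y_k)_{i,j} (0-indexed), following the recursive definition:
   Y_1 = (0 1 ... p-1); for k >= 2 the first k-1 rows are p copies of
   Y_{k-1} and the last row is constant blocks of length p^(k-1). *)
Fixpoint Yent (p k i j : nat) : nat :=
  match k with
  | 0 => 0%N
  | k'.+1 => if (i < k')%N then Yent p k' i (j %% p ^ k') else (j %/ p ^ k')%N
  end.

(* nat-indexed access to a row vector (0 outside the range) *)
Definition rv_nth (R : nmodType) (n : nat) (v : 'rV[R]_n) (j : nat) : R :=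
  match @insub _ (fun k => (k < n)%N) 'I_n j with Some j' => v 0 j' | None => 0 end.

(* Gray map phi_s : Z_{p^s} -> Z_p^{p^{s-1}}, u given by its value in [0,p^s) *)
Definition gray (p s u : nat) : 'rV['Z_p]_(p ^ s.-1) :=
  \row_j ((digit p s.-1 u + \sum_(i < s.-1) digit p i u * Yent p s.-1 i j)%N%:R).

(* Phi_s applied coordinatewise and concatenated *)
Definition Phi (p s n : nat) (v : 'rV['Z_(p ^ s)]_n) : 'rV['Z_p]_(n * p ^ s.-1) :=
  \row_k rv_nth (gray p s (val (rv_nth v (k %/ p ^ s.-1))))  (k %% p ^ s.-1).

Definition Tset (p s i : nat) : seq nat :=
  [seq (j * p ^ i.-1)%N | j <- iota 0 (p ^ (s - i).+1)].

(* ranges of the coordinates of the columns: {1} x T_1^(t1-1) x T_2^t2 x ... x T_s^ts,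
   where ts = [:: t_1; ...; t_s] and s = size ts *)
Definition coord_ranges (p : nat) (ts : seq nat) : seq (seq nat) :=
  let s := size ts in
  [:: 1%N] :: nseq (head 0%N ts).-1 (Tset p s 1)
    ++ flatten [seq nseq (nth 0%N ts i) (Tset p s i.+1) | i <- iota 1 s.-1].

Definition columns (p : nat) (ts : seq nat) : seq (seq nat) :=
  foldr (fun L acc => [seq x :: a | x <- L, a <- acc]) [:: [::]] (coord_ranges p ts).

Definition GHmat (p : nat) (ts : seq nat) :
  'M['Z_(p ^ size ts)]_(sumn ts, size (columns p ts)) :=
  \matrix_(i, j) (nth 0%N (nth [::] (columns p ts) j) i)%:R.

Definition GHlin (p : nat) (ts : seq nat) : {set 'rV['Z_(p ^ size ts)]_(size (columns p ts))} :=
  [set c *m GHmat p ts | c : 'rV_(sumn ts)].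

Definition GH (p : nat) (ts : seq nat) :
  {set 'rV['Z_p]_(size (columns p ts) * p ^ (size ts).-1)} :=
  [set Phi v | v in GHlin p ts].

Definition equiv_codes (p N1 N2 : nat) (C1 : {set 'rV['Z_p]_N1}) (C2 : {set 'rV['Z_p]_N2}) : Prop :=
  exists (a : 'rV['Z_p]_N2) (f : 'I_N2 -> 'I_N1),
    bijective f /\ C2 = [set a + \row_i c 0 (f i) | c : 'rV['Z_p]_N1 in C1].

(* Main.v *)
Require Import Defs.
From mathcomp Require Import all_boot all_order all_algebra.
From mathcomp Require Import zify.
Set Implicit Arguments. Unset Strict Implicit. Unset Printing Implicit Defensive.
Import GRing.Theory.

Section S0.

Definition cols (Rs : seq (seq nat)) : seq (seq nat) :=
  foldr (fun L acc => [seq x :: a | x <- L, a <- acc]) [:: [::]] Rs.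

Lemma columnsE p ts : columns p ts = cols (coord_ranges p ts).
Proof. by []. Qed.

Lemma cols_one X : cols ([:: 1%N] :: X) = map (cons 1%N) (cols X).
Proof. by rewrite /= cats0. Qed.

Lemma cols_map g Rs : cols (map (map g) Rs) = map (map g) (cols Rs).
Proof.
elim: Rs => [//|L Rs IH] /=.
by rewrite -/(cols _) IH allpairs_mapl allpairs_mapr map_allpairs.
Qed.

Lemma cols_rcons Rs L : cols (rcons Rs L) = [seq rcons a x | a <- cols Rs, x <- L].
Proof.
elim: Rs => [|R0 Rs IH] /=.
  rewrite cats0; elim: L => [//|x L IH] /=.
  by rewrite -IH.
rewrite -/(cols _) IH -/(cols Rs).
elim: R0 => [//|x0 R0 IH2] /=.
rewrite IH2 allpairs_cat; congr (_ ++ _).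
by rewrite map_allpairs allpairs_mapl.
Qed.

Lemma size_cols_elt Rs a : a \in cols Rs -> size a = size Rs.
Proof.
elim: Rs a => [|L Rs IH] a /=.
  by rewrite inE => /eqP ->.
by move=> /allpairsP [[x b] [_ /= hb ->]] /=; rewrite IH.
Qed.

Lemma nth_allpairs (A B C : Type) (f : A -> B -> C) a0 b0 c0 (As : seq A) (Bs : seq B) i j :
  (i < size As)%N -> (j < size Bs)%N ->
  nth c0 [seq f x y | x <- As, y <- Bs] (i * size Bs + j) = f (nth a0 As i) (nth b0 Bs j).
Proof.
elim: As i => [//|x As IH] [|i] /= hi hj.
  by rewrite nth_cat size_map hj (nth_map b0).
rewrite nth_cat size_map mulSn -addnA ltnNge leq_addr /=.
by rewrite addKn IH.
Qed.

End S0.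

Section S1.

Section Digits.
Variable p : nat.
Hypothesis p_gt0 : (0 < p)%N.

Lemma digit_addmul i j x K : (i < j)%N -> digit p i (x + K * p ^ j) = digit p i x.
Proof.
move=> hij; rewrite /digit.
have -> : (K * p ^ j = (K * p ^ (j - i).-1 * p) * p ^ i)%N.
  rewrite -!mulnA -expnS -expnD; congr (K * p ^ _); rewrite addnS -addSn prednK ?subn_gt0 // subnK //.
  exact: ltnW.
by rewrite addnC divnMDl ?expn_gt0 ?p_gt0 // modnMDl.
Qed.

Lemma digit_mod i s x : (i < s)%N -> digit p i (x %% p ^ s) = digit p i x.
Proof.
by move=> his; rewrite {2}(divn_eq x (p ^ s)) addnC digit_addmul.
Qed.

Lemma digit_top j x K : digit p j (x + K * p ^ j) = ((x %/ p ^ j + K) %% p)%N.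
Proof. by rewrite /digit addnC divnMDl ?expn_gt0 ?p_gt0 // addnC. Qed.

Lemma digit_shift0 a X : (a < p)%N -> digit p 0 (a + p * X) = a.
Proof. by move=> ha; rewrite /digit expn0 divn1 addnC mulnC modnMDl modn_small. Qed.

Lemma digit_shiftS i a X : (a < p)%N -> digit p i.+1 (a + p * X) = digit p i X.
Proof.
by move=> ha; rewrite /digit expnS divnMA mulnC addnC divnMDl // (divn_small ha) addn0.
Qed.

Lemma digit_div i y : digit p i.+1 y = digit p i (y %/ p).
Proof. by rewrite /digit expnS divnMA. Qed.

Lemma digit_lt i x : (digit p i x < p)%N.
Proof. by rewrite /digit ltn_pmod. Qed.

Lemma Yent_digit k i j : (i < k)%N -> (j < p ^ k)%N -> Yent p k i j = digit p i j.
Proof.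
elim: k i j => [//|k IH] i j /= hik hj.
case: ifP => hi.
  by rewrite IH ?ltn_pmod ?expn_gt0 ?p_gt0 // digit_mod.
have -> : i = k by apply/eqP; rewrite eqn_leq -ltnS hik leqNgt hi.
rewrite /digit modn_small // ltn_divLR ?expn_gt0 ?p_gt0 //.
by rewrite -expnS.
Qed.

End Digits.

Lemma Tset_shift p s i : (0 < i)%N -> Tset p s.+1 i.+1 = map (muln p) (Tset p s i).
Proof.
case: i => [//|i] _; rewrite /Tset -map_comp subSS; apply: eq_map => j /=.
by rewrite expnS mulnCA.
Qed.

End S1.

Section S2.
Local Open Scope ring_scope.


Lemma rv_nth_lt (R : nmodType) n (v : 'rV[R]_n) j (hj : (j < n)%N) : rv_nth v j = v 0 (Ordinal hj).
Proof. by rewrite /rv_nth insubT. Qed.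

Lemma rv_nth_ord (R : nmodType) n (v : 'rV[R]_n) (i : 'I_n) : rv_nth v i = v 0 i.
Proof. by rewrite (rv_nth_lt v (ltn_ord i)); congr (v 0 _); apply: val_inj. Qed.

Definition cv N n (c : 'rV['Z_N]_n) (i : nat) : nat := nat_of_ord (rv_nth c i).

Definition grayv p s u y := (digit p s.-1 u + \sum_(i < s.-1) digit p i u * digit p i y)%N.

Lemma Phi_entry p ts s (c : 'rV['Z_(p ^ size ts)]_(sumn ts))
  (k : 'I_(size (columns p ts) * p ^ (size ts).-1)) :
  (1 < p)%N -> size ts = s.+1 ->
  Phi (c *m GHmat p ts) 0 k =
  (grayv p (size ts) ((\sum_(0 <= i < sumn ts) cv c i *
       nth 0 (nth [::] (columns p ts) (k %/ p ^ (size ts).-1)) i) %% p ^ size ts) (k %% p ^ (size ts).-1))%:R.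
Proof.
move=> hp hs; rewrite /cv.
have p0 : (0 < p)%N by apply: ltnW.
have hP : (0 < p ^ (size ts).-1)%N by rewrite expn_gt0 p0.
have hk1 : (k %/ p ^ (size ts).-1 < size (columns p ts))%N by rewrite ltn_divLR.
have hk2 : (k %% p ^ (size ts).-1 < p ^ (size ts).-1)%N by rewrite ltn_pmod.
rewrite mxE (rv_nth_lt _ hk1) (rv_nth_lt _ hk2) !mxE.
have -> : \sum_j0 c 0 j0 * GHmat p ts j0 (Ordinal hk1) =
   ((\sum_(j0 < sumn ts) val (c ord0 j0) * nth 0%N (nth [::] (columns p ts) (k %/ p ^ (size ts).-1)) j0)%N)%:R.
  rewrite natr_sum; apply: eq_bigr => i _; rewrite natrM natr_Zp mxE //.
have hps : (1 < p ^ size ts)%N by rewrite hs expnS (leq_trans hp) // leq_pmulr // expn_gt0 p0.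
have hv : forall x : nat, val (x%:R : 'Z_(p ^ size ts)) = (x %% p ^ size ts)%N := val_Zp_nat hps.
rewrite !hv /grayv.
rewrite big_mkord.
congr ((_ + _)%N%:R).
  congr (digit _ _ (_ %% _)); apply: eq_bigr => i _; by rewrite rv_nth_ord.
apply: eq_bigr => i _; rewrite Yent_digit //.
congr (digit _ _ (_ %% _) * _)%N; apply: eq_bigr => i' _; by rewrite rv_nth_ord.
Qed.

End S2.

Section S3.

Lemma iotaSr m n : iota m n.+1 = rcons (iota m n) (m + n).
Proof. by rewrite -addn1 iotaD cats1. Qed.

Definition Wr p t1 (mid : seq nat) tlast :=
  nseq t1.-1 (Tset p (size mid).+2 1) ++
  flatten [seq nseq (nth 0 mid i) (Tset p (size mid).+2 i.+2) | i <- iota 0 (size mid)] ++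
  nseq tlast.-1 (Tset p (size mid).+2 (size mid).+2).

Lemma coordA p t1 mid tlast : 0 < tlast ->
  coord_ranges p (t1 :: rcons mid tlast) =
  [:: 1] :: rcons (Wr p t1 mid tlast) (Tset p (size mid).+2 (size mid).+2).
Proof.
move=> ht; rewrite /coord_ranges /= size_rcons; congr (_ :: _).
rewrite /Wr rcons_cat rcons_cat; congr (_ ++ _).
rewrite iotaSr -[rcons (iota _ _) _]cats1.
rewrite map_cat flatten_cat; congr (_ ++ _).
  rewrite (iotaDl 1 0) -map_comp; congr (flatten _); apply/eq_in_map => i.
  rewrite mem_iota add0n => /andP [_ hi] /=.
  by rewrite nth_rcons hi.
rewrite /= cats0 add1n nth_rcons ltnn eqxx.
by case: tlast ht => [//|t] _ /=; rewrite -cats1 (_ : [:: _] = nseq 1 (Tset p (size mid).+2 (size mid).+2)) // -nseqD addn1.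
Qed.

Lemma coordB p t1 mid tlast :
  coord_ranges p (1 :: t1.-1 :: rcons mid tlast.-1) =
  [:: 1] :: map (map (muln p)) (Wr p t1 mid tlast).
Proof.
rewrite /coord_ranges /= size_rcons; congr (_ :: _).
rewrite /Wr !map_cat map_nseq Tset_shift //; congr (_ ++ _).
rewrite iotaSr -[rcons (iota _ _) _]cats1.
rewrite map_cat flatten_cat map_flatten; congr (_ ++ _).
  rewrite (iotaDl 2 0) -!map_comp; congr (flatten _); apply/eq_in_map => i.
  rewrite mem_iota add0n => /andP [_ hi] /=.
  by rewrite nth_rcons hi map_nseq Tset_shift.
by rewrite /= cats0 add2n nth_rcons ltnn eqxx map_nseq Tset_shift.
Qed.

End S3.

Section S4.

Lemma point p n m (Cf Df : nat -> nat) (w : seq nat) y :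
  1 < p -> size w = m ->
  Cf 0 %% p ^ n.+2 = (Df 0 %/ p) %% p ^ n.+2 ->
  Cf m.+1 %% p = Df 0 %% p ->
  (forall i, i < m -> Cf i.+1 %% p ^ n.+2 = Df i.+1 %% p ^ n.+2) ->
  grayv p n.+3 ((\sum_(0 <= i < m.+1) Df i * nth 0 (1 :: map (muln p) w) i) %% p ^ n.+3) y =
  grayv p n.+2 ((\sum_(0 <= i < m.+2) Cf i * nth 0 (1 :: rcons w (y %% p * p ^ n.+1)) i)
                 %% p ^ n.+2) (y %/ p) %[mod p].
Proof.
move=> hp hw hC0 hCm hCi.
have p0 : 0 < p by apply: ltnW.
set a := Df 0 %% p.
set X := Df 0 %/ p + \sum_(0 <= i < m) Df i.+1 * nth 0 w i.
have ha : a < p by rewrite ltn_pmod.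
have hU : \sum_(0 <= i < m.+1) Df i * nth 0 (1 :: map (muln p) w) i = a + p * X.
  rewrite big_nat_recl //= muln1 mulnDr big_distrr /= addnA.
  rewrite {1}(divn_eq (Df 0) p) [_ * p]mulnC [a + _]addnC; congr (_ + _).
  apply: eq_big_nat => i /andP [_ hi].
  by rewrite (nth_map 0) ?hw // mulnCA.
set X' := Cf 0 + \sum_(0 <= i < m) Cf i.+1 * nth 0 w i.
have hV : \sum_(0 <= i < m.+2) Cf i * nth 0 (1 :: rcons w (y %% p * p ^ n.+1)) i =
          X' + (Cf m.+1 * (y %% p)) * p ^ n.+1.
  rewrite big_nat_recl //= muln1 big_nat_recr //= -addnA -mulnA; congr (_ + (_ + _)).
    apply: eq_big_nat => i /andP [_ hi].
    by rewrite nth_rcons hw hi.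
  by rewrite nth_rcons hw ltnn eqxx.
have hXX : X %% p ^ n.+2 = X' %% p ^ n.+2.
  rewrite /X /X' -modnDm -[in RHS]modnDm hC0; congr ((_ + _) %% _).
  rewrite -modn_summ -[in RHS]modn_summ; congr (_ %% _).
  apply: eq_big_nat => i /andP [_ hi].
  by rewrite -modnMml -hCi // modnMml.
have hdX : forall i, i < n.+2 -> digit p i X = digit p i X'.
  by move=> i hi; rewrite -(digit_mod p0 X hi) hXX digit_mod.
rewrite hU hV /grayv /=.
rewrite digit_mod // digit_shiftS //.
under eq_bigr => i _ do rewrite digit_mod ?(leq_trans (ltn_ord i)) //.
rewrite big_ord_recl /= digit_shift0 //.
under eq_bigr => i _ do rewrite /bump /= add1n digit_shiftS // digit_div.
rewrite digit_mod // digit_top.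
under [in RHS]eq_bigr => i _ do rewrite digit_mod ?(leq_trans (ltn_ord i)) // digit_addmul // -hdX ?(leq_trans (ltn_ord i)) //.
have -> : digit p 0 y = y %% p by rewrite /digit expn0 divn1.
rewrite hdX // /digit.
rewrite addnA -modnDml -[in RHS]modnDml; congr ((_ + _) %% _).
  rewrite modnDml modn_mod -modnDmr -[in RHS]modnDmr; congr ((_ + _) %% _).
  by rewrite /a -[in RHS]modnMml hCm.
by [].
Qed.

End S4.

Section S5.
Local Open Scope ring_scope.


Lemma lt_mixed a b A P : (a < A)%N -> (b < P)%N -> (a * P + b < A * P)%N.
Proof.
move=> ha hb; apply: (@leq_trans (a * P + P)); first by rewrite ltn_add2l.
by rewrite -mulSnr leq_mul2r ha orbT.
Qed.

Lemma divmodE q r d : (r < d)%N -> ((q * d + r) %/ d = q /\ (q * d + r) %% d = r)%N.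
Proof.
move=> hr; have d0 : (0 < d)%N by apply: leq_ltn_trans hr.
by rewrite divnMDl // divn_small // addn0 modnMDl modn_small.
Qed.

Lemma size_Wr p t1 mid tlast :
  size (Wr p t1 mid tlast) = (t1.-1 + (sumn mid + tlast.-1))%N.
Proof.
rewrite /Wr !size_cat !size_nseq size_flatten /shape -map_comp.
congr (_ + (_ + _))%N.
rewrite (eq_map (g := nth 0 mid)); first by rewrite -/(mkseq _ _) mkseq_nth.
by move=> i /=; rewrite size_nseq.
Qed.

Lemma step p t1 mid tlast : prime p -> (0 < t1)%N -> (0 < tlast)%N ->
  equiv_codes (GH p (t1 :: rcons mid tlast)) (GH p (1%N :: t1.-1 :: rcons mid tlast.-1)).
Proof.
move=> pp ht1 htl.
have hp : (1 < p)%N := prime_gt1 pp.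
have p0 : (0 < p)%N by apply: ltnW.
set tsA := t1 :: rcons mid tlast.
set tsB := 1%N :: t1.-1 :: rcons mid tlast.-1.
set n := size mid.
set W := Wr p t1 mid tlast.
set m := size W.
set CW := cols W.
set T := Tset p n.+2 n.+2.
have sA : size tsA = n.+2 by rewrite /= size_rcons.
have sB : size tsB = n.+3 by rewrite /= size_rcons.
have cA : columns p tsA = map (cons 1%N) [seq rcons a x | a <- CW, x <- T].
  by rewrite columnsE coordA // cols_one cols_rcons.
have cB : columns p tsB = map (cons 1%N) (map (map (muln p)) CW).
  by rewrite columnsE coordB cols_one cols_map.
have szT : size T = p by rewrite /T /Tset size_map size_iota subnn expn1.
have sumA : sumn tsA = m.+2.
  rewrite /m /W size_Wr /tsA /= sumn_rcons; lia.
have sumB : sumn tsB = m.+1.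
  rewrite /m /W size_Wr /tsB /= sumn_rcons; lia.
have szA : size (columns p tsA) = (size CW * p)%N by rewrite cA size_map size_allpairs szT.
have szB : size (columns p tsB) = size CW by rewrite cB !size_map.
have hcolsz : forall j, (j < size CW)%N -> size (nth [::] CW j) = m.
  by move=> j hj; rewrite (size_cols_elt (mem_nth _ hj)).
pose Q := (p ^ n.+2)%N.
pose P := (p ^ n.+1)%N.
have QP : Q = (p * P)%N by rewrite /Q /P expnS.
have P0 : (0 < P)%N by rewrite expn_gt0 p0.
have Q0 : (0 < Q)%N by rewrite expn_gt0 p0.
pose fn k := ((k %/ Q * p + (k %% Q) %% p) * P + (k %% Q) %/ p)%N.
pose gn k := (k %/ Q * Q + ((k %% Q) %/ P + p * ((k %% Q) %% P)))%N.
have eN1 : (size (columns p tsA) * p ^ (size tsA).-1 = size CW * Q)%N.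
  by rewrite szA sA /= QP mulnA.
have eN2 : (size (columns p tsB) * p ^ (size tsB).-1 = size CW * Q)%N.
  by rewrite szB sB.
have hrQ : forall k, (k %% Q < Q)%N by move=> k; rewrite ltn_pmod.
have fnE : forall k, fn k = (k %/ Q * Q + ((k %% Q) %% p * P + (k %% Q) %/ p))%N.
  by move=> k; rewrite /fn QP; nia.
have fn_lt : forall k, (k < size CW * Q)%N -> (fn k < size CW * Q)%N.
  move=> k hk; have -> : (size CW * Q = size CW * p * P)%N by rewrite QP mulnA.
  rewrite /fn; apply: lt_mixed; last first.
    by rewrite ltn_divLR // mulnC -QP.
  by apply: lt_mixed; [rewrite ltn_divLR // | rewrite ltn_pmod].
have gn_lt : forall k, (k < size CW * Q)%N -> (gn k < size CW * Q)%N.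
  move=> k hk; rewrite /gn; apply: lt_mixed; first by rewrite ltn_divLR.
  rewrite addnC mulnC [X in (_ < X)%N]QP [X in (_ < X)%N]mulnC; apply: lt_mixed; first by rewrite ltn_pmod.
  by rewrite ltn_divLR // mulnC -QP.
have fgK : forall k, gn (fn k) = k.
  move=> k; rewrite fnE /gn.
  have hin : ((k %% Q) %% p * P + (k %% Q) %/ p < Q)%N.
    rewrite [X in (_ < X)%N]QP; apply: lt_mixed; first by rewrite ltn_pmod.
    by rewrite ltn_divLR // mulnC -QP.
  have [-> ->] := divmodE (k %/ Q) hin.
  have hin2 : ((k %% Q) %/ p < P)%N by rewrite ltn_divLR // mulnC -QP.
  have [-> ->] := divmodE ((k %% Q) %% p) hin2.
  by rewrite [(p * _)%N]mulnC [(_ %% p + _)%N]addnC -divn_eq -divn_eq.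
have gfK : forall k, fn (gn k) = k.
  move=> k; rewrite /gn.
  have hin : ((k %% Q) %/ P + p * ((k %% Q) %% P) < Q)%N.
    rewrite addnC mulnC [X in (_ < X)%N]QP [X in (_ < X)%N]mulnC; apply: lt_mixed; first by rewrite ltn_pmod.
    by rewrite ltn_divLR // mulnC -QP.
  rewrite fnE; have [-> ->] := divmodE (k %/ Q) hin.
  have hb : ((k %% Q) %/ P < p)%N by rewrite ltn_divLR // mulnC -QP.
  rewrite [X in (X %% p)%N]addnC [X in (X %/ p)%N]addnC [(p * _)%N]mulnC.
  have [-> ->] := divmodE ((k %% Q) %% P) hb.
  by rewrite -divn_eq -divn_eq.
have fn_lt' : forall k : 'I_(size (columns p tsB) * p ^ (size tsB).-1),
    (fn k < size (columns p tsA) * p ^ (size tsA).-1)%N.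
  by move=> k; rewrite eN1 fn_lt // -eN2.
have gn_lt' : forall k : 'I_(size (columns p tsA) * p ^ (size tsA).-1),
    (gn k < size (columns p tsB) * p ^ (size tsB).-1)%N.
  by move=> k; rewrite eN2 gn_lt // -eN1.
pose f := fun k => Ordinal (fn_lt' k).
pose g := fun k => Ordinal (gn_lt' k).
have fbij : bijective f.
  by exists g => k; apply: val_inj; rewrite /= ?fgK ?gfK.
have hvp : forall x : nat, val (x%:R : 'Z_p) = (x %% p)%N := val_Zp_nat hp.
have key : forall (d : 'rV['Z_(p ^ size tsB)]_(sumn tsB)) (c : 'rV['Z_(p ^ size tsA)]_(sumn tsA)),
    (cv c 0 %% Q = (cv d 0 %/ p) %% Q)%N -> (cv c m.+1 %% p = cv d 0 %% p)%N ->
    (forall i, (i < m)%N -> cv c i.+1 %% Q = cv d i.+1 %% Q)%N ->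
    Phi (d *m GHmat p tsB) = \row_i (Phi (c *m GHmat p tsA)) ord0 (f i).
  move=> d c h0 hm hi; apply/rowP => k; rewrite mxE.
  rewrite (Phi_entry _ _ hp sB) (Phi_entry _ _ hp sA).
  apply: val_inj; rewrite !hvp.
  move: h0 hm hi; move: (cv c) (cv d) => Cf Df h0 hm hi.
  have hk : (k < size CW * Q)%N by rewrite -eN2.
  have -> : nat_of_ord (f k) = fn k by [].
  move: (nat_of_ord k) hk => kk hk.
  rewrite sA sB sumA sumB cA cB /= -/P -/Q.
  set q := (kk %/ Q)%N; set r := (kk %% Q)%N.
  have hq : (q < size CW)%N by rewrite ltn_divLR.
  have hr : (r < Q)%N by rewrite ltn_pmod.
  have hy' : (r %/ p < P)%N by rewrite ltn_divLR // mulnC -QP.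
  have hy0 : (r %% p < p)%N by rewrite ltn_pmod.
  have fkE : fn kk = ((q * p + r %% p) * P + r %/ p)%N by [].
  rewrite fkE; have [-> ->] := divmodE (q * p + r %% p) hy'.
  rewrite (nth_map [::]) ?size_map // (nth_map [::]) //.
  have hqp : (q * p + r %% p < size CW * p)%N by apply: lt_mixed.
  rewrite (nth_map [::]) ?size_allpairs ?szT //.
  have := nth_allpairs (fun a x => rcons a x) [::] 0 [::] hq (_ : (r %% p < size T)%N).
  rewrite szT => -> //.
  have -> : nth 0 T (r %% p) = (r %% p * P)%N.
    by rewrite /T /Tset (nth_map 0) ?size_iota ?subnn ?expn1 // nth_iota.
  by apply: (point (w := nth [::] CW q)) => //; apply: hcolsz.
have pQ : (p %| Q)%N by rewrite /Q expnS dvdn_mulr.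
have QQ : (Q %| p ^ n.+3)%N by rewrite [X in (_ %| X)%N]expnS dvdn_mull.
have pQ3 : (p %| p ^ n.+3)%N by apply: dvdn_trans QQ.
have hpA : (1 < p ^ size tsA)%N by rewrite sA (leq_trans hp) // leq_pmulr // expnS; rewrite muln_gt0 p0 expn_gt0 p0.
have hpB : (1 < p ^ size tsB)%N by rewrite sB (leq_trans hp) // expnS leq_pmulr // expn_gt0 p0.
have hvA : forall x : nat, val (x%:R : 'Z_(p ^ size tsA)) = (x %% p ^ size tsA)%N := val_Zp_nat hpA.
have hvB : forall x : nat, val (x%:R : 'Z_(p ^ size tsB)) = (x %% p ^ size tsB)%N := val_Zp_nat hpB.
exists 0, f; split => //.
apply/setP => w; apply/idP/idP.
  case/imsetP => v /imsetP [d _ ->] ->.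
  pose cAv := \row_(i < sumn tsA) (if val i == 0%N then (cv d 0 %/ p)%:R
       else if val i == m.+1 then (cv d 0 %% p)%:R else (cv d i)%:R) : 'rV['Z_(p ^ size tsA)]_(sumn tsA).
  have cvA : forall j, (j < m.+2)%N -> cv cAv j = (if j == 0%N then (cv d 0 %/ p) %% p ^ n.+2
       else if j == m.+1 then (cv d 0 %% p) %% p ^ n.+2 else cv d j %% p ^ n.+2)%N.
    move=> j hj; have hj' : (j < sumn tsA)%N by rewrite sumA.
    rewrite /cv (rv_nth_lt _ hj') mxE /=.
    by case: ifP => _; [|case: ifP => _]; rewrite hvA sA.
  apply/imsetP; exists (Phi (cAv *m GHmat p tsA)).
    by apply: imset_f; apply: imset_f.
  rewrite add0r; apply: key.
  - by rewrite cvA // eqxx modn_mod.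
  - by rewrite cvA // eqxx /= (modn_dvdm _ pQ) modn_mod.
  - move=> i hi; rewrite cvA ?ltnS ?(ltnW hi) //= eqSS (ltn_eqF hi) /=.
    by rewrite modn_mod.
case/imsetP => v /imsetP [u /imsetP [c _ ->] ->] ->.
pose dBv := \row_(i < sumn tsB) (if val i == 0%N then (cv c m.+1 %% p + p * cv c 0)%:R
       else (cv c i)%:R) : 'rV['Z_(p ^ size tsB)]_(sumn tsB).
have cvB : forall j, (j < m.+1)%N -> cv dBv j = (if j == 0%N then (cv c m.+1 %% p + p * cv c 0) %% p ^ n.+3
       else cv c j %% p ^ n.+3)%N.
  move=> j hj; have hj' : (j < sumn tsB)%N by rewrite sumB.
  rewrite /cv (rv_nth_lt _ hj') mxE /=.
  by case: ifP => _; rewrite hvB sB.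
have cvB0 : cv dBv 0 = ((cv c m.+1 %% p + p * cv c 0) %% p ^ n.+3)%N by rewrite cvB.
have cvBS : forall j, (0 < j < m.+1)%N -> cv dBv j = (cv c j %% p ^ n.+3)%N.
  by move=> j /andP [j0 hj]; rewrite cvB // (gtn_eqF j0).
have h0 : (cv c 0 %% Q = (cv dBv 0 %/ p) %% Q)%N.
  rewrite cvB0 [(p ^ n.+3)%N]expnSr -/Q -modn_divl.
  by rewrite (mulnC p (cv c 0%N)) [X in (X %/ p)%N]addnC divnMDl // (divn_small (ltn_pmod _ p0)) addn0 modn_mod.
have hm : (cv c m.+1 %% p = cv dBv 0 %% p)%N.
  by rewrite cvB0 (modn_dvdm _ pQ3) (mulnC p (cv c 0%N)) [X in (_ = X %% p)%N]addnC modnMDl modn_mod.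
have hi : forall i, (i < m)%N -> (cv c i.+1 %% Q = cv dBv i.+1 %% Q)%N.
  by move=> i hi; rewrite cvBS ?ltnS // (modn_dvdm _ QQ).
rewrite add0r -(key dBv c h0 hm hi).
by apply: imset_f; apply: imset_f.
Qed.

End S5.
Section S7.

Lemma equiv_trans p N1 N2 N3 (C1 : {set 'rV['Z_p]_N1}) (C2 : {set 'rV['Z_p]_N2})
  (C3 : {set 'rV['Z_p]_N3}) :
  equiv_codes C1 C2 -> equiv_codes C2 C3 -> equiv_codes C1 C3.
Proof.
move=> [a2 [f [fb E2]]] [a3 [g [gb E3]]].
exists (a3 + \row_i a2 ord0 (g i))%R, (f \o g); split; first exact: bij_comp.
rewrite E3 E2; apply/setP => w; apply/imsetP/imsetP.
  case=> c2 /imsetP [c1 hc1 ->] ->; exists c1 => //.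
  by apply/rowP => i; rewrite !mxE addrA.
case=> c1 hc1 ->; exists (a2 + \row_i c1 ord0 (f i))%R; first exact: imset_f.
by apply/rowP => i; rewrite !mxE addrA.
Qed.

End S7.

Unset Implicit Arguments.

Theorem theorem4 (p t1 : nat) (mid : seq nat) (tlast l : nat) :
  prime p -> (1 <= t1)%N -> (1 <= tlast)%N -> (1 <= l <= tlast)%N ->
  equiv_codes (GH p (t1 :: rcons mid tlast))
              (GH p (1%N :: nseq l.-1 0%N ++ t1.-1 :: rcons mid (tlast - l))).
Proof.
move=> pp ht1 htl /andP [hl1 hl2].
elim: l hl1 hl2 => [//|l IH] _ hl.
case: l IH hl => [|l] IH hl.
  by rewrite /= subn1; apply: step.
apply: equiv_trans (IH _ (ltnW hl)) _ => //.
have hpos : (0 < tlast - l.+1)%N by rewrite subn_gt0.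
have := @step p 1 (nseq l 0 ++ t1.-1 :: mid) (tlast - l.+1) pp (ltn0Sn 0) hpos.
by rewrite !rcons_cat /= -subnS.
Qed.
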